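(* Let $\{A_1,A_2,A_3\}$ be a gyrobarycentrically independent set in the Einstein gyrovector space $\mathbb{R}^n_s$, with gyroangles $\alpha_1,\alpha_2,\alpha_3$ and defect $\delta=\pi-\alpha_1-\alpha_2-\alpha_3$, and write $\gamma_{ij}=\gamma_{\ominus A_i\oplus A_j}$. Set $m_1=(\gamma_{12}+\gamma_{13}-\gamma_{23}-1)(\gamma_{23}-1)$, $m_2=(\gamma_{12}-\gamma_{13}+\gamma_{23}-1)(\gamma_{13}-1)$, $m_3=(-\gamma_{12}+\gamma_{13}+\gamma_{23}-1)(\gamma_{12}-1)$, and let $O\in\mathbb{R}^n$ be the point $$O=\frac{m_1\gamma_{A_1}A_1+m_2\gamma_{A_2}A_2+m_3\gamma_{A_3}A_3}{m_1\gamma_{A_1}+m_2\gamma_{A_2}+m_3\gamma_{A_3}}.$$ Then: (i) $O$ is the circumgyrocenter of gyrotriangle $A_1A_2A_3$ (when the latter exists); (ii) the coordinates $(m_1:m_2:m_3)$ are equivalently (up to a common nonzero factor) $(\cos(\alpha_1+\tfrac\delta2)\sin\alpha_1:\cos(\alpha_2+\tfrac\delta2)\sin\alpha_2:\cos(\alpha_3+\tfrac\delta2)\sin\alpha_3)$; (iii) the constant $m_O$ defined by $m_O^2=m_1^2+m_2^2+m_3^2+2(m_1m_2\gamma_{12}+m_1m_3\gamma_{13}+m_2m_3\gamma_{23})$ satisfies $$m_O^2=\{(\gamma_{12}+\gamma_{13}+\gamma_{23}-1)^2-2(\gamma_{12}^2+\gamma_{13}^2+\gamma_{23}^2-1)\}(1+2\gamma_{12}\gamma_{13}\gamma_{23}-\gamma_{12}^2-\gamma_{13}^2-\gamma_{23}^2)=D_3(D_3-H_3),$$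 where $D_3=\det\begin{pmatrix}1&\gamma_{12}&\gamma_{13}\\\gamma_{12}&1&\gamma_{23}\\\gamma_{13}&\gamma_{23}&1\end{pmatrix}$ and $H_3=2(\gamma_{12}-1)(\gamma_{13}-1)(\gamma_{23}-1)$; (iv) $O\in\mathbb{R}^n_s$ if and only if $m_O^2>0$, which is equivalent to each of the following mutually equivalent inequalities: $\sin(2\alpha_1+\tfrac\delta2)+\sin(2\alpha_2+\tfrac\delta2)+\sin(2\alpha_3+\tfrac\delta2)>3\sin\tfrac\delta2$; $\sin(\alpha_1+\tfrac\delta2)\sin(\alpha_2+\tfrac\delta2)\sin(\alpha_3+\tfrac\delta2)>\sin\tfrac\delta2$; $(\gamma_{12}+\gamma_{13}+\gamma_{23}-1)^2>2(\gamma_{12}^2+\gamma_{13}^2+\gamma_{23}^2-1)$; $4(\gamma_{12}-1)(\gamma_{13}-1)>(\gamma_{12}+\gamma_{13}-\gamma_{23}-1)^2$.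
   Context: Fix $s>0$, $n\ge2$; $\mathbb{R}^n_s=\{v\in\mathbb{R}^n:\|v\|<s\}$ with Einstein addition $u\oplus v=\frac{1}{1+u\cdot v/s^2}\{u+\frac{1}{\gamma_u}v+\frac{1}{s^2}\frac{\gamma_u}{1+\gamma_u}(u\cdot v)u\}$, $\gamma_v=(1-\|v\|^2/s^2)^{-1/2}$, $\ominus v=-v$. Gyrodistance between $A,B$: $\|\ominus A\oplus B\|$. $\{A_1,A_2,A_3\}$ is gyrobarycentrically independent if $\ominus A_1\oplus A_2,\ominus A_1\oplus A_3$ are linearly independent. Gyroangle $\alpha_1$ of gyrotriangle $A_1A_2A_3$ at $A_1$: $\cos\alpha_1=\frac{(\ominus A_1\oplus A_2)\cdot(\ominus A_1\oplus A_3)}{\|\ominus A_1\oplus A_2\|\|\ominus A_1\oplus A_3\|}$, similarly $\alpha_2,\alpha_3$. The circumgyrocenter of gyrotriangle $A_1A_2A_3$ is the point of $(A_1\oplus\mathrm{span}\{\ominus A_1\oplus A_2,\ominus A_1\oplus A_3\})\cap\mathbb{R}^n_s$ equigyrodistant from $A_1,A_2,A_3$ (it need not exist). Gyrobarycentric coordinates are homogeneous: only their ratios matter. *)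

(* Defs.v *)
From HB Require Import structures.
From mathcomp Require Import all_boot all_order all_algebra.
From mathcomp Require Import all_classical all_reals all_analysis.
Set Implicit Arguments. Unset Strict Implicit. Unset Printing Implicit Defensive.
Import Order.TTheory GRing.Theory Num.Theory.
Local Open Scope ring_scope.

Section Einstein.
Variable R : realType.
Variable n : nat.
Implicit Types (s : R) (u v : 'rV[R]_n).

Definition dotv u v : R := \sum_(i < n) u 0 i * v 0 i.
Definition normv v : R := Num.sqrt (dotv v v).

Definition in_ball s v : Prop := normv v < s.

Definition gam s v : R := (Num.sqrt (1 - dotv v v / s ^+ 2))^-1.

Definition eadd s u v : 'rV[R]_n :=
  (1 + dotv u v / s ^+ 2)^-1 *:
    (u + (gam s u)^-1 *: v
       + (s ^+ 2)^-1 * (gam s u / (1 + gam s u)) * dotv u v *: u).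

Definition gvec s (A B : 'rV[R]_n) : 'rV[R]_n := eadd s (- A) B.

Definition gdist s (A B : 'rV[R]_n) : R := normv (gvec s A B).

Definition lin_indep2 u v : Prop :=
  forall a b : R, a *: u + b *: v = 0 -> a = 0 /\ b = 0.

Definition gyro_independent s (A1 A2 A3 : 'rV[R]_n) : Prop :=
  lin_indep2 (gvec s A1 A2) (gvec s A1 A3).

Definition gangle s (A1 A2 A3 : 'rV[R]_n) : R :=
  acos (dotv (gvec s A1 A2) (gvec s A1 A3) /
        (normv (gvec s A1 A2) * normv (gvec s A1 A3))).

Definition is_circumgyrocenter s (A1 A2 A3 P : 'rV[R]_n) : Prop :=
  (exists a b : R,
      in_ball s (a *: gvec s A1 A2 + b *: gvec s A1 A3) /\
      P = eadd s A1 (a *: gvec s A1 A2 + b *: gvec s A1 A3)) /\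
  in_ball s P /\
  gdist s P A1 = gdist s P A2 /\ gdist s P A2 = gdist s P A3.

End Einstein.

(* the 3x3 Gram-type matrix [[1,g12,g13],[g12,1,g23],[g13,g23,1]] *)
Definition gmat3 (R : realType) (g12 g13 g23 : R) : 'M[R]_3 :=
  \matrix_(i < 3, j < 3)
    (if i == j then 1
     else if (i + j == 1)%N then g12
     else if (i + j == 2)%N then g13
     else g23).

(* Main.v *)
Require Import Defs.
From HB Require Import structures.
From mathcomp Require Import all_boot all_order all_algebra.
From mathcomp Require Import all_classical all_reals all_analysis.
From mathcomp Require Import ring lra.
Import Order.TTheory GRing.Theory Num.Theory.
Local Open Scope ring_scope.

Set Implicit Arguments. Unset Strict Implicit. Unset Printing Implicit Defensive.

Section Dot.
Variable R : realType.
Variable n : nat.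
Implicit Types (u v w : 'rV[R]_n) (k : R).

Lemma dotvC u v : dotv u v = dotv v u.
Proof. by apply: eq_bigr => i _; rewrite mulrC. Qed.
Lemma dotvDl u v w : dotv (u + v) w = dotv u w + dotv v w.
Proof. by rewrite /dotv -big_split; apply: eq_bigr => i _; rewrite !mxE mulrDl. Qed.
Lemma dotvZl k u v : dotv (k *: u) v = k * dotv u v.
Proof. by rewrite /dotv mulr_sumr; apply: eq_bigr => i _; rewrite !mxE mulrA. Qed.
Lemma dotvNl u v : dotv (- u) v = - dotv u v.
Proof. by rewrite -scaleN1r dotvZl mulN1r. Qed.
Lemma dotvDr u v w : dotv w (u + v) = dotv w u + dotv w v.
Proof. by rewrite dotvC dotvDl !(dotvC w). Qed.
Lemma dotvZr k u v : dotv v (k *: u) = k * dotv v u.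
Proof. by rewrite dotvC dotvZl dotvC. Qed.
Lemma dotvNr u v : dotv v (- u) = - dotv v u.
Proof. by rewrite dotvC dotvNl dotvC. Qed.
Lemma dotv_ge0 u : 0 <= dotv u u.
Proof. by apply: sumr_ge0 => i _; rewrite -expr2 sqr_ge0. Qed.
Lemma dotv_eq0 u : dotv u u = 0 -> u = 0.
Proof.
move=> /eqP; rewrite psumr_eq0 => [/allP H|i _]; last by rewrite -expr2 sqr_ge0.
apply/rowP => i; rewrite mxE; apply/eqP; move: (H i (mem_index_enum _)).
by rewrite -expr2 sqrf_eq0.
Qed.
End Dot.


Section Gam.
Variable R : realType.
Variable n : nat.
Variable s : R.
Hypothesis hs : 0 < s.
Implicit Types (u v w A B C : 'rV[R]_n) (k : R).

Lemma s2_gt0 : 0 < s ^+ 2. Proof. by rewrite exprn_gt0. Qed.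
Lemma s2_neq0 : s ^+ 2 != 0. Proof. by rewrite gt_eqF // s2_gt0. Qed.

Lemma ball_dot v : in_ball s v -> dotv v v < s ^+ 2.
Proof.
rewrite /in_ball /normv -[X in _ < X -> _](@ger0_norm _ s) ?ltW //.
by rewrite -sqrtr_sqr ltr_sqrt // s2_gt0.
Qed.

Lemma dot_ball v : dotv v v < s ^+ 2 -> in_ball s v.
Proof.
move=> h; rewrite /in_ball /normv -[X in _ < X](@ger0_norm _ s) ?ltW //.
by rewrite -sqrtr_sqr ltr_sqrt // s2_gt0.
Qed.

Lemma one_sub_gt0 v : dotv v v < s ^+ 2 -> 0 < 1 - dotv v v / s ^+ 2.
Proof. by move=> h; rewrite subr_gt0 ltr_pdivrMr ?s2_gt0 // mul1r. Qed.

Lemma gam_gt0 v : dotv v v < s ^+ 2 -> 0 < gam s v.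
Proof. by move=> h; rewrite /gam invr_gt0 sqrtr_gt0 one_sub_gt0. Qed.

Lemma gam_sq v : dotv v v < s ^+ 2 -> gam s v ^+ 2 * (1 - dotv v v / s ^+ 2) = 1.
Proof.
move=> h; rewrite /gam exprVn sqr_sqrtr ?ltW ?one_sub_gt0 // mulVf //.
by rewrite gt_eqF // one_sub_gt0.
Qed.

Lemma gamV2 v : dotv v v < s ^+ 2 -> (gam s v ^+ 2)^-1 = 1 - dotv v v / s ^+ 2.
Proof. by move=> h; rewrite /gam exprVn invrK sqr_sqrtr ?ltW ?one_sub_gt0. Qed.

Lemma dotv_gam v : dotv v v < s ^+ 2 ->
  dotv v v = s ^+ 2 * (1 - (gam s v ^+ 2)^-1).
Proof. move=> h; rewrite gamV2 //; field; by rewrite gt_eqF. Qed.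

Lemma gam_eq v y : 0 < y -> 1 - dotv v v / s ^+ 2 = (y ^+ 2)^-1 -> gam s v = y.
Proof.
move=> y0 e; rewrite /gam e sqrtrV ?invr_ge0 ?exprn_ge0 ?ltW //.
by rewrite sqrtr_sqr invrK gtr0_norm.
Qed.

Lemma dot_amgm u v : 2 * dotv u v <= dotv u u + dotv v v.
Proof.
have := dotv_ge0 (u - v).
rewrite dotvDl !dotvDr !dotvNl !dotvNr (dotvC v u) => h; lra.
Qed.

Lemma dot_abs_lt u v : dotv u u < s ^+ 2 -> dotv v v < s ^+ 2 ->
  0 < 1 + dotv u v / s ^+ 2 /\ 0 < 1 - dotv u v / s ^+ 2.
Proof.
move=> hu hv; have h1 := dot_amgm u v; have h2 := dot_amgm u (- v).
rewrite dotvNr dotvNl dotvNr opprK in h2.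
have hs2 := s2_gt0.
have e1 : dotv u v < s ^+ 2 by lra.
have e2 : - dotv u v < s ^+ 2 by lra.
have e3 : - (dotv u v / s ^+ 2) < 1 by rewrite -mulNr ltr_pdivrMr // mul1r.
have e4 : dotv u v / s ^+ 2 < 1 by rewrite ltr_pdivrMr // mul1r.
split; lra.
Qed.

Lemma add_s2 x : 0 < 1 + x / s ^+ 2 -> 0 < s ^+ 2 + x.
Proof.
move=> h; have -> : s ^+ 2 + x = s ^+ 2 * (1 + x / s ^+ 2) by field; rewrite gt_eqF.
by rewrite mulr_gt0 // s2_gt0.
Qed.
Lemma sub_s2 x : 0 < 1 - x / s ^+ 2 -> 0 < s ^+ 2 - x.
Proof.
move=> h; have -> : s ^+ 2 - x = s ^+ 2 * (1 - x / s ^+ 2) by field; rewrite gt_eqF.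
by rewrite mulr_gt0 // s2_gt0.
Qed.

Lemma eadd_dot u v : dotv u u < s ^+ 2 -> dotv v v < s ^+ 2 ->
  1 - dotv (eadd s u v) (eadd s u v) / s ^+ 2
  = ((gam s u * gam s v * (1 + dotv u v / s ^+ 2)) ^+ 2)^-1.
Proof.
move=> hu hv; have [hp _] := dot_abs_lt hu hv.
have gu := gam_gt0 hu; have gv := gam_gt0 hv.
rewrite /eadd !(dotvZl,dotvZr,dotvDl,dotvDr) (dotvC v u).
rewrite (dotv_gam hu) (dotv_gam hv).
field; rewrite ?(gt_eqF hs) ?(gt_eqF gu) ?(gt_eqF gv) ?(gt_eqF hp) ?andbT //=.
by apply/andP; split; rewrite gt_eqF //; [exact: add_s2 | exact: addr_gt0].
Qed.

Lemma gam_eadd u v : dotv u u < s ^+ 2 -> dotv v v < s ^+ 2 ->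
  gam s (eadd s u v) = gam s u * gam s v * (1 + dotv u v / s ^+ 2).
Proof.
move=> hu hv; have [hp _] := dot_abs_lt hu hv.
have gu := gam_gt0 hu; have gv := gam_gt0 hv.
by apply: gam_eq; [rewrite !mulr_gt0 | exact: eadd_dot].
Qed.

Lemma eadd_ball u v : dotv u u < s ^+ 2 -> dotv v v < s ^+ 2 ->
  dotv (eadd s u v) (eadd s u v) < s ^+ 2.
Proof.
move=> hu hv; have := eadd_dot hu hv.
set y := (X in _ = X) => e.
have : 0 < y by rewrite invr_gt0 exprn_gt0 // !mulr_gt0 ?gam_gt0 //; case: (dot_abs_lt hu hv).
by rewrite -e subr_gt0 ltr_pdivrMr ?s2_gt0 // mul1r.
Qed.

Lemma gam_eadd_scale u v : dotv u u < s ^+ 2 -> dotv v v < s ^+ 2 ->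
  gam s (eadd s u v) *: eadd s u v =
  (gam s u * gam s v) *: (u + (gam s u)^-1 *: v
       + (s ^+ 2)^-1 * (gam s u / (1 + gam s u)) * dotv u v *: u).
Proof.
move=> hu hv; have [hp _] := dot_abs_lt hu hv.
rewrite gam_eadd // /eadd scalerA; congr (_ *: _); field.
by rewrite (gt_eqF hs) gt_eqF // add_s2.
Qed.

Lemma gam_neg v : gam s (- v) = gam s v.
Proof. by rewrite /gam dotvNl dotvNr opprK. Qed.

Lemma dot_neg v : dotv (- v) (- v) = dotv v v.
Proof. by rewrite dotvNl dotvNr opprK. Qed.

Lemma gam_gvec A B : dotv A A < s ^+ 2 -> dotv B B < s ^+ 2 ->
  gam s (gvec s A B) = gam s A * gam s B * (1 - dotv A B / s ^+ 2).
Proof.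
move=> hA hB; rewrite /gvec gam_eadd ?dot_neg // gam_neg dotvNl.
by rewrite mulNr.
Qed.

Lemma gvec_ball A B : dotv A A < s ^+ 2 -> dotv B B < s ^+ 2 ->
  dotv (gvec s A B) (gvec s A B) < s ^+ 2.
Proof. by move=> hA hB; apply: eadd_ball; rewrite ?dot_neg. Qed.

Lemma gvec_scale A B : dotv A A < s ^+ 2 -> dotv B B < s ^+ 2 ->
  gam s (gvec s A B) *: gvec s A B =
  gam s B *: B - (gam s A * gam s B *
     (1 - (s ^+ 2)^-1 * (gam s A / (1 + gam s A)) * dotv A B)) *: A.
Proof.
move=> hA hB; rewrite /gvec gam_eadd_scale ?dot_neg // gam_neg dotvNl.
have gA := gam_gt0 hA.
apply/rowP => i; rewrite !mxE; field.
by rewrite (gt_eqF hs) (gt_eqF gA) gt_eqF // addr_gt0.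
Qed.

Lemma gvec_dot A B C : dotv A A < s ^+ 2 -> dotv B B < s ^+ 2 -> dotv C C < s ^+ 2 ->
  dotv (gvec s A B) (gvec s A C) = s ^+ 2 * (1 - (1 - dotv B C / s ^+ 2) /
     (gam s A ^+ 2 * (1 - dotv A B / s ^+ 2) * (1 - dotv A C / s ^+ 2))).
Proof.
move=> hA hB hC; have [_ h1] := dot_abs_lt hA hB; have [_ h2] := dot_abs_lt hA hC.
have gA := gam_gt0 hA.
rewrite /gvec /eadd !(dotvZl,dotvZr,dotvDl,dotvDr) gam_neg !dotvNl !dotvNr !opprK.
rewrite ?(dotvC B A) ?(dotvC C A) ?(dotvC C B) (dotv_gam hA).
field; rewrite ?(gt_eqF hs) ?(gt_eqF gA) ?(gt_eqF h1) ?(gt_eqF h2) ?andbT //=.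
by rewrite !gt_eqF ?sub_s2 // addr_gt0.
Qed.

End Gam.


Section Core.
Variable R : realType.

Lemma angle_facts (N p q d : R) : 0 < p -> 0 < q -> 0 < d ->
  p ^+ 2 * q ^+ 2 - N ^+ 2 = d ^+ 2 ->
  cos (acos (N / (p * q))) = N / (p * q) /\
  sin (acos (N / (p * q))) = d / (p * q) /\
  0 < acos (N / (p * q)) /\ acos (N / (p * q)) < pi.
Proof.
move=> hp hq hd e.
have pq0 : 0 < p * q by rewrite mulr_gt0.
set x := N / (p * q).
have ex : 1 - x ^+ 2 = (d / (p * q)) ^+ 2.
  by rewrite /x !expr_div_n -e; field; rewrite !gt_eqF.
have x2 : x ^+ 2 < 1.
  have : 0 < (d / (p * q)) ^+ 2 by rewrite exprn_gt0 // divr_gt0.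
  rewrite -ex; lra.
have hx1 : -1 < x by nra.
have hx2 : x < 1 by nra.
split; first by rewrite acosK // in_itv /= !ltW.
split; first by rewrite sin_acos ?ltW // ex sqrtr_sqr gtr0_norm // divr_gt0.
split; [apply: acos_gt0 | apply: acos_ltpi]; rewrite ?hx1 ?hx2 ?ltW //.
Qed.

Lemma sum_lt_pi (x y : R) : 0 <= x <= pi -> 0 <= y <= pi -> 0 < cos x + cos y -> x + y < pi.
Proof.
move=> /andP[x0 x1] /andP[y0 y1] h.
have : cos (pi - y) < cos x.
  by rewrite cosB cospi sinpi mul0r addr0 mulN1r; lra.
rewrite ltr_cos ?in_itv /= ?x0 ?x1 //; last by apply/andP; split; lra.
lra.
Qed.

Definition Dv (a b c : R) := 1 + 2 * a * b * c - a ^+ 2 - b ^+ 2 - c ^+ 2.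

Lemma dd3 (d A B C : R) : (d * A) * B * (d * C) = d ^+ 2 * (A * B * C).
Proof. by ring. Qed.
Lemma dd2 (d A B C : R) : (d * A) * (d * B) * C = d ^+ 2 * (A * B * C).
Proof. by ring. Qed.

Lemma sin2_sub (x H : R) : sin (2 * x + H) - sin H = 2 * (cos (x + H) * sin x).
Proof.
have -> : sin H = sin ((x + H) - x) by congr sin; ring.
have -> : 2 * x + H = x + (x + H) by ring.
by rewrite sinD sinB; ring.
Qed.

Lemma ddh1 (d A B C : R) : (d * A) * B * (d * C / 2) = d ^+ 2 * (A * B * C / 2).
Proof. by ring. Qed.
Lemma ddh2 (d A B C : R) : (d * A) * (d * C / 2) * B = d ^+ 2 * (A * (C / 2) * B).
Proof. by ring. Qed.

Lemma dd (d A B : R) : (d * A) * (d * B) = d ^+ 2 * (A * B).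
Proof. by ring. Qed.

Lemma cos_sum_pos (a b c p q r : R) : 1 < a -> 1 < b -> 1 < c -> 0 < Dv a b c ->
  0 < p -> 0 < q -> 0 < r -> p ^+ 2 = a ^+ 2 - 1 -> q ^+ 2 = b ^+ 2 - 1 ->
  r ^+ 2 = c ^+ 2 - 1 ->
  0 < (a * b - c) / (p * q) + (a * c - b) / (p * r).
Proof.
move=> ha hb hc hD hp hq hr ep eq er.
have -> : (a * b - c) / (p * q) + (a * c - b) / (p * r) =
          ((a * b - c) * r + (a * c - b) * q) / (p * q * r).
  by field; rewrite !gt_eqF.
apply: divr_gt0; last by rewrite !mulr_gt0.
have key : (a * c - b) ^+ 2 * q ^+ 2 - (a * b - c) ^+ 2 * r ^+ 2 =
           (c ^+ 2 - b ^+ 2) * Dv a b c.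
  by rewrite eq er /Dv; ring.
case: (lerP 0 (a * b - c)) => h1; case: (lerP 0 (a * c - b)) => h2.
- have : 0 < (a * b - c) * r + (a * c - b) * q \/ ((a * b - c) = 0 /\ (a * c - b) = 0).
    case: (ltrP 0 (a * b - c)) => h3; first by left; nra.
    case: (ltrP 0 (a * c - b)) => h4; first by left; nra.
    by right; split; lra.
  case => // [[h3 h4]]; exfalso; nra.
- (* N2 < 0 : b > a c > c *)
  have hbc : c < b by nra.
  have hsq : (a * c - b) ^+ 2 * q ^+ 2 < (a * b - c) ^+ 2 * r ^+ 2.
    have : 0 < (b ^+ 2 - c ^+ 2) * Dv a b c by apply: mulr_gt0 => //; nra.
    lra.
  have : (b - a * c) * q < (a * b - c) * r.
    rewrite -(@ltr_pXn2r _ 2) // ?nnegrE; [|nra|nra].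
    by rewrite !exprMn; nra.
  lra.
- have hbc : b < c by nra.
  have hsq : (a * b - c) ^+ 2 * r ^+ 2 < (a * c - b) ^+ 2 * q ^+ 2.
    have : 0 < (c ^+ 2 - b ^+ 2) * Dv a b c by apply: mulr_gt0 => //; nra.
    lra.
  have : (c - a * b) * r < (a * c - b) * q.
    rewrite -(@ltr_pXn2r _ 2) // ?nnegrE; [|nra|nra].
    by rewrite !exprMn; nra.
  lra.
- exfalso; nra.
Qed.

Lemma core (a b c : R) : 1 < a -> 1 < b -> 1 < c -> 0 < Dv a b c ->
  let p := Num.sqrt (a ^+ 2 - 1) in
  let q := Num.sqrt (b ^+ 2 - 1) in
  let r := Num.sqrt (c ^+ 2 - 1) in
  let al1 := acos ((a * b - c) / (p * q)) in
  let al2 := acos ((a * c - b) / (p * r)) in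
  let al3 := acos ((b * c - a) / (q * r)) in
  let del := pi - al1 - al2 - al3 in
  let m1 := (a + b - c - 1) * (c - 1) in
  let m2 := (a - b + c - 1) * (b - 1) in
  let m3 := (- a + b + c - 1) * (a - 1) in
  let E := (a + b + c - 1) ^+ 2 - 2 * (a ^+ 2 + b ^+ 2 + c ^+ 2 - 1) in
  (exists k : R, k != 0 /\
     m1 = k * (cos (al1 + del / 2) * sin al1) /\
     m2 = k * (cos (al2 + del / 2) * sin al2) /\
     m3 = k * (cos (al3 + del / 2) * sin al3)) /\
  (0 < E <->
     3 * sin (del / 2) < sin (2 * al1 + del / 2) + sin (2 * al2 + del / 2)
                         + sin (2 * al3 + del / 2)) /\
  (0 < E <->
     sin (del / 2) < sin (al1 + del / 2) * sin (al2 + del / 2) * sin (al3 + del / 2)).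
Proof.
move=> ha hb hc hD p q r al1 al2 al3 del m1 m2 m3 E.
have hP : 0 < a ^+ 2 - 1 by nra.
have hQ : 0 < b ^+ 2 - 1 by nra.
have hR : 0 < c ^+ 2 - 1 by nra.
have p0 : 0 < p by rewrite sqrtr_gt0.
have q0 : 0 < q by rewrite sqrtr_gt0.
have r0 : 0 < r by rewrite sqrtr_gt0.
have ep : p ^+ 2 = a ^+ 2 - 1 by rewrite sqr_sqrtr // ltW.
have eq : q ^+ 2 = b ^+ 2 - 1 by rewrite sqr_sqrtr // ltW.
have er : r ^+ 2 = c ^+ 2 - 1 by rewrite sqr_sqrtr // ltW.
set d := Num.sqrt (Dv a b c).
have d0 : 0 < d by rewrite sqrtr_gt0.
have ed : d ^+ 2 = Dv a b c by rewrite sqr_sqrtr // ltW.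
have [hc1 [hs1 [a10 a1pi]]] : cos al1 = (a * b - c) / (p * q) /\
   sin al1 = d / (p * q) /\ 0 < al1 /\ al1 < pi.
  by apply: angle_facts => //; rewrite ep eq ed /Dv; ring.
have [hc2 [hs2 [a20 a2pi]]] : cos al2 = (a * c - b) / (p * r) /\
   sin al2 = d / (p * r) /\ 0 < al2 /\ al2 < pi.
  by apply: angle_facts => //; rewrite ep er ed /Dv; ring.
have [hc3 [hs3 [a30 a3pi]]] : cos al3 = (b * c - a) / (q * r) /\
   sin al3 = d / (q * r) /\ 0 < al3 /\ al3 < pi.
  by apply: angle_facts => //; rewrite eq er ed /Dv; ring.
have s12 : al1 + al2 < pi.
  apply: sum_lt_pi; [by apply/andP; split; lra | by apply/andP; split; lra|].
  by rewrite hc1 hc2; apply: (cos_sum_pos ha hb hc hD).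
have s123 : al1 + al2 + al3 < pi.
  apply: sum_lt_pi; [by apply/andP; split; lra | by apply/andP; split; lra|].
  rewrite cosD hc1 hc2 hs1 hs2 hc3.
  have -> : (a * b - c) / (p * q) * ((a * c - b) / (p * r)) - d / (p * q) * (d / (p * r))
     + (b * c - a) / (q * r) =
     ((a * b - c) * (a * c - b) - d ^+ 2 + (b * c - a) * p ^+ 2) / (p ^+ 2 * q * r).
    by field; rewrite !gt_eqF.
  rewrite ed ep; apply: divr_gt0; last by rewrite !mulr_gt0 // exprn_gt0.
  have -> : (a * b - c) * (a * c - b) - Dv a b c + (b * c - a) * (a ^+ 2 - 1)
     = (a - 1) * Dv a b c by rewrite /Dv; ring.
  by rewrite mulr_gt0 // subr_gt0.
set H := del / 2.
have H0 : 0 < H by rewrite /H /del; lra.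
have Hpi : H < pi / 2 by rewrite /H /del; lra.
have sH0 : 0 < sin H by apply: sin_gt0_pihalf; rewrite H0 Hpi.
set S := al1 + al2 + al3.
have eS : S = pi - (H + H) by rewrite /S /H /del; field.
have sinS : sin S = 2 * (sin H * cos H) by rewrite eS sinB sinpi cospi sinD; ring.
have cosS : 1 + cos S = 2 * sin H ^+ 2.
  by rewrite eS cosB sinpi cospi cosD; have := cos2Dsin2 H; lra.
set c1 := cos al1; set c2 := cos al2; set c3 := cos al3.
set s1 := sin al1; set s2 := sin al2; set s3 := sin al3.
set P := a ^+ 2 - 1; set Q := b ^+ 2 - 1; set RR := c ^+ 2 - 1.
set N1 := a * b - c; set N2 := a * c - b; set N3 := b * c - a.
have pq := (gt_eqF p0, gt_eqF q0, gt_eqF r0).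
have PQR0 : P * Q * RR != 0 by rewrite !mulf_neq0 // gt_eqF.
have he1 : s1 * s2 * s3 = d * (Dv a b c / (P * Q * RR)).
  rewrite /s1 /s2 /s3 hs1 hs2 hs3 -ed /P /Q /RR /N1 /N2 /N3 -ep -eq -er; field; by rewrite !gt_eqF.
have he2 : s1 * s2 * c3 + s1 * c2 * s3 + c1 * s2 * s3 =
   Dv a b c * (N1 + N2 + N3) / (P * Q * RR).
  rewrite /s1 /s2 /s3 /c1 /c2 /c3 hs1 hs2 hs3 hc1 hc2 hc3 -ed /P /Q /RR /N1 /N2 /N3 -ep -eq -er.
  field; by rewrite !gt_eqF.
have he3 : s1 * c2 * c3 + c1 * s2 * c3 + c1 * c2 * s3 =
   d * ((N2 * N3 + N1 * N3 + N1 * N2) / (P * Q * RR)).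
  rewrite /s1 /s2 /s3 /c1 /c2 /c3 hs1 hs2 hs3 hc1 hc2 hc3 /P /Q /RR /N1 /N2 /N3 -ep -eq -er.
  field; by rewrite !gt_eqF.
have he4 : c1 * c2 * c3 = N1 * N2 * N3 / (P * Q * RR).
  rewrite /c1 /c2 /c3 hc1 hc2 hc3 /P /Q /RR /N1 /N2 /N3 -ep -eq -er; field; by rewrite !gt_eqF.
have hsinS : sin S = d * ((N2 * N3 + N1 * N3 + N1 * N2) / (P * Q * RR)
                          - Dv a b c / (P * Q * RR)).
  rewrite /S !(sinD,cosD) -/c1 -/c2 -/c3 -/s1 -/s2 -/s3 mulrBr -he1 -he3; ring.
have hcosS : cos S = N1 * N2 * N3 / (P * Q * RR)
                     - Dv a b c * (N1 + N2 + N3) / (P * Q * RR).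
  rewrite /S !(sinD,cosD) -/c1 -/c2 -/c3 -/s1 -/s2 -/s3 -he2 -he4; ring.
have hsc1 : s1 * c1 = d * (N1 / (P * Q)).
  rewrite /s1 /c1 hs1 hc1 /P /Q /RR /N1 /N2 /N3 -ep -eq; field; by rewrite !gt_eqF.
have hsc2 : s2 * c2 = d * (N2 / (P * RR)).
  rewrite /s2 /c2 hs2 hc2 /P /Q /RR /N1 /N2 /N3 -ep -er; field; by rewrite !gt_eqF.
have hsc3 : s3 * c3 = d * (N3 / (Q * RR)).
  rewrite /s3 /c3 hs3 hc3 /P /Q /RR /N1 /N2 /N3 -eq -er; field; by rewrite !gt_eqF.
have hss1 : s1 ^+ 2 = Dv a b c / (P * Q).
  rewrite /s1 hs1 -ed /P /Q /RR /N1 /N2 /N3 -ep -eq; field; by rewrite !gt_eqF.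
have hss2 : s2 ^+ 2 = Dv a b c / (P * RR).
  rewrite /s2 hs2 -ed /P /Q /RR /N1 /N2 /N3 -ep -er; field; by rewrite !gt_eqF.
have hss3 : s3 ^+ 2 = Dv a b c / (Q * RR).
  rewrite /s3 hs3 -ed /P /Q /RR -eq -er; field; by rewrite !gt_eqF.
have Tgen : forall (x : R), 2 * sin H * (cos (x + H) * sin x) =
    sin x * cos x * sin S - sin x ^+ 2 * (1 + cos S).
  by move=> x; rewrite sinS cosS cosD; ring.
set k0 := Dv a b c / (P * Q * RR).
have k00 : 0 < k0 by rewrite /k0 divr_gt0 // !mulr_gt0.
have T1 : 2 * sin H * (cos (al1 + H) * s1) = k0 * m1.
  rewrite Tgen -/s1 -/c1 hsinS (mulrC s1 c1) [c1 * s1]mulrC hsc1 dd ed hss1 hcosS.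
  rewrite /k0 /m1 /N1 /N2 /N3 /P /Q /RR /Dv; field.
  by rewrite !gt_eqF.
have T2 : 2 * sin H * (cos (al2 + H) * s2) = k0 * m2.
  rewrite Tgen -/s2 -/c2 hsinS hsc2 dd ed hss2 hcosS.
  rewrite /k0 /m2 /N1 /N2 /N3 /P /Q /RR /Dv; field.
  by rewrite !gt_eqF.
have T3 : 2 * sin H * (cos (al3 + H) * s3) = k0 * m3.
  rewrite Tgen -/s3 -/c3 hsinS hsc3 dd ed hss3 hcosS.
  rewrite /k0 /m3 /N1 /N2 /N3 /P /Q /RR /Dv; field.
  by rewrite !gt_eqF.
have kE : m1 + m2 + m3 = E by rewrite /m1 /m2 /m3 /E; ring.
have sH2 : 2 * sin H != 0 by rewrite mulf_neq0 // gt_eqF.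
split.
  exists (2 * sin H / k0); split; first by rewrite mulf_neq0 // invr_eq0 gt_eqF.
  have key : forall m t, 2 * sin H * t = k0 * m -> m = 2 * sin H / k0 * t.
    move=> m t e; rewrite -mulrA (mulrC _ t) mulrA e; field; by rewrite gt_eqF.
  by split; [apply: key T1 | split; [apply: key T2 | apply: key T3]].
have Ssum : sin (2 * al1 + H) + sin (2 * al2 + H) + sin (2 * al3 + H) - 3 * sin H
   = 2 * (cos (al1 + H) * s1 + cos (al2 + H) * s2 + cos (al3 + H) * s3).
  have := sin2_sub al1 H; have := sin2_sub al2 H; have := sin2_sub al3 H.
  rewrite -/s1 -/s2 -/s3; lra.
have Tsum : 2 * sin H * (cos (al1 + H) * s1 + cos (al2 + H) * s2 + cos (al3 + H) * s3)
   = k0 * E by rewrite -kE !mulrDr T1 T2 T3.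
have sgn : forall t, 2 * sin H * t = k0 * E -> (0 < E <-> 0 < t).
  move=> t e; split => h.
    have : 0 < 2 * sin H * t by rewrite e mulr_gt0.
    by rewrite pmulr_rgt0 // mulr_gt0.
  have : 0 < k0 * E by rewrite -e !mulr_gt0.
  by rewrite pmulr_rgt0.
split.
  rewrite (sgn _ Tsum); lra.
set cH := cos H.
have hC : cH ^+ 2 = 1 - sin H ^+ 2 by rewrite cos2sin2.
have hU : sin H ^+ 2 = (1 + cos S) / 2 by rewrite cosS mulrAC divff ?mul1r // pnatr_eq0.
have hW : sin H * cH = sin S / 2 by rewrite sinS mulrAC divff ?mul1r // pnatr_eq0.
have X : 4 * sin H * (sin (al1 + H) * sin (al2 + H) * sin (al3 + H)) - 4 * sin H ^+ 2 =
   4 * ((s1 * s2 * s3) * cH ^+ 2 * (sin H * cH)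
      + (s1 * s2 * c3 + s1 * c2 * s3 + c1 * s2 * s3) * cH ^+ 2 * sin H ^+ 2
      + (s1 * c2 * c3 + c1 * s2 * c3 + c1 * c2 * s3) * (sin H * cH) * sin H ^+ 2
      + (c1 * c2 * c3) * sin H ^+ 2 * sin H ^+ 2) - 4 * sin H ^+ 2.
  by rewrite !sinD -/cH -/s1 -/s2 -/s3 -/c1 -/c2 -/c3; ring.
have X2 : 4 * sin H * (sin (al1 + H) * sin (al2 + H) * sin (al3 + H)) - 4 * sin H ^+ 2
   = k0 * E.
  rewrite X hC he1 he2 he3 he4 hW hsinS hU hcosS ddh1 ddh2 ed.
  rewrite /k0 /E /N1 /N2 /N3 /P /Q /RR /Dv; field.
  by rewrite !gt_eqF.
have : 2 * sin H * (2 * (sin (al1 + H) * sin (al2 + H) * sin (al3 + H) - sin H))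
   = k0 * E by rewrite -X2; ring.
move/sgn => ->; lra.
Qed.

End Core.


Section Vec.
Variable R : realType.
Variable n : nat.
Variable s : R.
Hypothesis hs : 0 < s.
Implicit Types (u v w A B C : 'rV[R]_n) (k : R).

Lemma indep_neq0 u v : lin_indep2 u v -> u != 0 /\ v != 0.
Proof.
move=> h; split; apply/eqP => e.
  by move: (h 1 0); rewrite e scaler0 scale0r addr0 => /(_ erefl) [/eqP]; rewrite oner_eq0.
by move: (h 0 1); rewrite e scaler0 scale0r addr0 => /(_ erefl) [_ /eqP]; rewrite oner_eq0.
Qed.

Lemma dotv_gt0 u : u != 0 -> 0 < dotv u u.
Proof.
move=> h; rewrite lt_def dotv_ge0 andbT; apply/eqP => e.
by move: h; rewrite (dotv_eq0 e) eqxx.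
Qed.

Lemma cs_strict u v : lin_indep2 u v -> dotv u v ^+ 2 < dotv u u * dotv v v.
Proof.
move=> h; have [u0 v0] := indep_neq0 h.
have vv := dotv_gt0 v0.
set z := dotv v v *: u + (- dotv u v) *: v.
have z0 : z != 0.
  apply/eqP => e; have [] := h _ _ e => e1 _.
  by move: vv; rewrite e1 ltxx.
have := dotv_gt0 z0.
have -> : dotv z z = dotv v v * (dotv u u * dotv v v - dotv u v ^+ 2).
  rewrite /z !(dotvDl, dotvDr, dotvZl, dotvZr) (dotvC v u); ring.
rewrite pmulr_rgt0 //; lra.
Qed.

Lemma gam_gvec_sym A B : dotv A A < s ^+ 2 -> dotv B B < s ^+ 2 ->
  gam s (gvec s A B) = gam s (gvec s B A).
Proof.
by move=> hA hB; rewrite !gam_gvec // dotvC (mulrC (gam s A)).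
Qed.

Lemma gvec_dotL A B C : dotv A A < s ^+ 2 -> dotv B B < s ^+ 2 -> dotv C C < s ^+ 2 ->
  dotv (gvec s A B) (gvec s A C) = s ^+ 2 * (1 - gam s (gvec s B C) /
     (gam s (gvec s A B) * gam s (gvec s A C))).
Proof.
move=> hA hB hC; rewrite gvec_dot // !gam_gvec //.
have [_ h1] := dot_abs_lt hs hA hB; have [_ h2] := dot_abs_lt hs hA hC.
have gA := gam_gt0 hs hA; have gB := gam_gt0 hs hB; have gC := gam_gt0 hs hC.
congr (_ * (1 - _)); field.
by rewrite !gt_eqF ?(sub_s2 hs).
Qed.

Lemma dot_gvec_self A B : dotv A A < s ^+ 2 -> dotv B B < s ^+ 2 ->
  dotv (gvec s A B) (gvec s A B) = s ^+ 2 * (1 - (gam s (gvec s A B) ^+ 2)^-1).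
Proof. by move=> hA hB; rewrite (dotv_gam hs (gvec_ball hs hA hB)). Qed.

Lemma normv_gvec A B : dotv A A < s ^+ 2 -> dotv B B < s ^+ 2 ->
  normv (gvec s A B) =
  s * Num.sqrt (gam s (gvec s A B) ^+ 2 - 1) / gam s (gvec s A B).
Proof.
move=> hA hB; have g0 := gam_gt0 hs (gvec_ball hs hA hB).
rewrite /normv dot_gvec_self //.
set g := gam s (gvec s A B).
have -> : s ^+ 2 * (1 - (g ^+ 2)^-1) = (s / g) ^+ 2 * (g ^+ 2 - 1).
  by field; rewrite gt_eqF.
rewrite sqrtrM ?exprn_ge0 ?divr_ge0 ?ltW // sqrtr_sqr ger0_norm ?divr_ge0 ?ltW //.
by rewrite mulrAC.
Qed.

Lemma quad (m1 m2 m3 : R) A1 A2 A3 :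
  dotv A1 A1 < s ^+ 2 -> dotv A2 A2 < s ^+ 2 -> dotv A3 A3 < s ^+ 2 ->
  (m1 * gam s A1 + m2 * gam s A2 + m3 * gam s A3) ^+ 2 -
  dotv (m1 * gam s A1 *: A1 + m2 * gam s A2 *: A2 + m3 * gam s A3 *: A3)
       (m1 * gam s A1 *: A1 + m2 * gam s A2 *: A2 + m3 * gam s A3 *: A3) / s ^+ 2
  = m1 ^+ 2 + m2 ^+ 2 + m3 ^+ 2 + 2 * (m1 * m2 * gam s (gvec s A1 A2)
      + m1 * m3 * gam s (gvec s A1 A3) + m2 * m3 * gam s (gvec s A2 A3)).
Proof.
move=> h1 h2 h3.
have g1 := gam_gt0 hs h1; have g2 := gam_gt0 hs h2; have g3 := gam_gt0 hs h3.
rewrite !gam_gvec // !(dotvDl, dotvDr, dotvZl, dotvZr).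
rewrite (dotvC A2 A1) (dotvC A3 A1) (dotvC A3 A2).
rewrite (dotv_gam hs h1) (dotv_gam hs h2) (dotv_gam hs h3).
field; by rewrite !gt_eqF.
Qed.

Lemma circ_rep A1 A2 A3 (a b : R) :
  dotv A1 A1 < s ^+ 2 -> dotv A2 A2 < s ^+ 2 -> dotv A3 A3 < s ^+ 2 ->
  dotv (a *: gvec s A1 A2 + b *: gvec s A1 A3) (a *: gvec s A1 A2 + b *: gvec s A1 A3)
     < s ^+ 2 ->
  exists l1 l2 l3 : R,
  gam s (eadd s A1 (a *: gvec s A1 A2 + b *: gvec s A1 A3)) =
     l1 * gam s A1 + l2 * gam s A2 + l3 * gam s A3 /\
  gam s (eadd s A1 (a *: gvec s A1 A2 + b *: gvec s A1 A3)) *: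
     eadd s A1 (a *: gvec s A1 A2 + b *: gvec s A1 A3) =
     (l1 * gam s A1) *: A1 + (l2 * gam s A2) *: A2 + (l3 * gam s A3) *: A3.
Proof.
move=> h1 h2 h3 hw.
set w := a *: gvec s A1 A2 + b *: gvec s A1 A3.
have g1 := gam_gt0 hs h1; have g2 := gam_gt0 hs h2; have g3 := gam_gt0 hs h3.
have gw := gam_gt0 hs hw.
have g12 := gam_gt0 hs (gvec_ball hs h1 h2).
have g13 := gam_gt0 hs (gvec_ball hs h1 h3).
have e2 := gvec_scale hs h1 h2; have e3 := gvec_scale hs h1 h3.
set G12 := gam s (gvec s A1 A2) in g12 e2.
set G13 := gam s (gvec s A1 A3) in g13 e3.
set b2 := (gam s A1 * gam s A2 *
         (1 - (s ^+ 2)^-1 * (gam s A1 / (1 + gam s A1)) * dotv A1 A2)) in e2.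
set b3 := (gam s A1 * gam s A3 *
         (1 - (s ^+ 2)^-1 * (gam s A1 / (1 + gam s A1)) * dotv A1 A3)) in e3.
have ew2 : gvec s A1 A2 = G12^-1 *: (gam s A2 *: A2 - b2 *: A1).
  by rewrite -e2 scalerA mulVf ?scale1r // gt_eqF.
have ew3 : gvec s A1 A3 = G13^-1 *: (gam s A3 *: A3 - b3 *: A1).
  by rewrite -e3 scalerA mulVf ?scale1r // gt_eqF.
have ew : w = (a / G12) *: (gam s A2 *: A2 - b2 *: A1)
            + (b / G13) *: (gam s A3 *: A3 - b3 *: A1).
  by rewrite /w ew2 ew3 !scalerA.
rewrite (gam_eadd_scale hs h1 hw) (gam_eadd hs h1 hw) -/w.
move: gw; set gW := gam s w => gw.
have edot : dotv A1 w = (a / G12) * (gam s A2 * dotv A1 A2 - b2 * dotv A1 A1)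
           + (b / G13) * (gam s A3 * dotv A1 A3 - b3 * dotv A1 A1).
  by rewrite ew !(dotvDr, dotvZr, dotvNr).
exists ((gam s A1 * gW * (1 + dotv A1 w / s ^+ 2) - gW * a / G12 * gam s A2
          - gW * b / G13 * gam s A3) / gam s A1), (gW * a / G12), (gW * b / G13).
split; first by field; rewrite ?gt_eqF.
rewrite -/w edot ew (dotv_gam hs h1) /b2 /b3.
apply/rowP => i; rewrite !mxE.
field.
by rewrite !gt_eqF // addr_gt0.
Qed.

Lemma L_rep P A1 A2 A3 X (l1 l2 l3 : R) :
  dotv A1 A1 < s ^+ 2 -> dotv A2 A2 < s ^+ 2 -> dotv A3 A3 < s ^+ 2 ->
  dotv X X < s ^+ 2 -> dotv P P < s ^+ 2 ->
  gam s P = l1 * gam s A1 + l2 * gam s A2 + l3 * gam s A3 ->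
  gam s P *: P = (l1 * gam s A1) *: A1 + (l2 * gam s A2) *: A2 + (l3 * gam s A3) *: A3 ->
  gam s (gvec s P X) = l1 * gam s (gvec s A1 X) + l2 * gam s (gvec s A2 X)
                       + l3 * gam s (gvec s A3 X).
Proof.
move=> h1 h2 h3 hX hP eg ev.
rewrite !gam_gvec //.
have -> : gam s P * gam s X * (1 - dotv P X / s ^+ 2) =
          gam s X * (gam s P - dotv (gam s P *: P) X / s ^+ 2).
  by rewrite dotvZl; ring.
rewrite ev eg !(dotvDl, dotvZl); ring.
Qed.

Lemma gam_gvec_self A : dotv A A < s ^+ 2 -> gam s (gvec s A A) = 1.
Proof.
move=> h; rewrite gam_gvec // -expr2; exact: gam_sq.
Qed.

End Vec.

Lemma solve3 (R : realType) (a b c t l1 l2 l3 : R) : Dv a b c != 0 ->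
  l1 + l2 * a + l3 * b = t -> l1 * a + l2 + l3 * c = t -> l1 * b + l2 * c + l3 = t ->
  [/\ l1 = t / Dv a b c * ((a + b - c - 1) * (c - 1)),
      l2 = t / Dv a b c * ((a - b + c - 1) * (b - 1)) &
      l3 = t / Dv a b c * ((- a + b + c - 1) * (a - 1))].
Proof.
move=> hD e1 e2 e3.
have k1 : Dv a b c * l1 = (1 - c ^+ 2) * (l1 + l2 * a + l3 * b)
   + (b * c - a) * (l1 * a + l2 + l3 * c) + (a * c - b) * (l1 * b + l2 * c + l3).
  by rewrite /Dv; ring.
have k2 : Dv a b c * l2 = (b * c - a) * (l1 + l2 * a + l3 * b)
   + (1 - b ^+ 2) * (l1 * a + l2 + l3 * c) + (a * b - c) * (l1 * b + l2 * c + l3).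
  by rewrite /Dv; ring.
have k3 : Dv a b c * l3 = (a * c - b) * (l1 + l2 * a + l3 * b)
   + (a * b - c) * (l1 * a + l2 + l3 * c) + (1 - a ^+ 2) * (l1 * b + l2 * c + l3).
  by rewrite /Dv; ring.
rewrite e1 e2 e3 in k1 k2 k3.
split.
- by rewrite -(mulKf hD l1) k1; field.
- by rewrite -(mulKf hD l2) k2; field.
- by rewrite -(mulKf hD l3) k3; field.
Qed.

Lemma gam_of_norm (R : realType) (n : nat) (s : R) (x y : 'rV[R]_n) :
  normv x = normv y -> gam s x = gam s y.
Proof.
move=> e; rewrite /gam.
have : normv x ^+ 2 = normv y ^+ 2 by rewrite e.
by rewrite /normv !sqr_sqrtr ?dotv_ge0 // => ->.
Qed.

Lemma iv1_aux (R : realType) (dn VV s2 : R) : 0 < s2 -> 0 <= VV ->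
  (dn != 0 /\ dn^-1 * (dn^-1 * VV) < s2) <-> 0 < dn ^+ 2 - VV / s2.
Proof.
move=> hs2 hV; split.
  move=> [d0 h]; have d2 : 0 < dn ^+ 2 by rewrite lt_def sqrf_eq0 d0 sqr_ge0.
  have : VV < s2 * dn ^+ 2.
    have -> : VV = dn ^+ 2 * (dn^-1 * (dn^-1 * VV)) by field.
    by rewrite mulrC ltr_pM2r.
  rewrite subr_gt0 ltr_pdivrMr // mulrC //.
move=> h.
have d0 : dn != 0.
  apply/eqP => e; move: h; rewrite e expr0n /= sub0r oppr_gt0 => h.
  have : 0 <= VV / s2 by rewrite divr_ge0 // ltW.
  lra.
split => //.
have d2 : 0 < dn ^+ 2 by rewrite lt_def sqrf_eq0 d0 sqr_ge0.
have -> : dn^-1 * (dn^-1 * VV) = VV / dn ^+ 2 by field.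
by rewrite ltr_pdivrMr //; move: h; rewrite subr_gt0 ltr_pdivrMr // mulrC.
Qed.


Lemma det_gmat3 (R : realType) (a b c : R) : \det (gmat3 a b c) = Dv a b c.
Proof.
rewrite (expand_det_row _ ord0) !big_ord_recl big_ord0 /cofactor.
rewrite !(expand_det_row _ ord0) !big_ord_recl !big_ord0 /cofactor !det_mx11.
rewrite !mxE /= /Dv.
rewrite /bump /=. ring.
Qed.

Unset Implicit Arguments.
Set Strict Implicit.

Theorem mainTheorem7 (R : realType) (n : nat) (s : R) (A1 A2 A3 : 'rV[R]_n) :
  (2 <= n)%N -> 0 < s ->
  in_ball s A1 -> in_ball s A2 -> in_ball s A3 ->
  gyro_independent s A1 A2 A3 ->
  let al1 := gangle s A1 A2 A3 in
  let al2 := gangle s A2 A1 A3 in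
  let al3 := gangle s A3 A1 A2 in
  let del := pi - al1 - al2 - al3 in
  let g12 := gam s (gvec s A1 A2) in
  let g13 := gam s (gvec s A1 A3) in
  let g23 := gam s (gvec s A2 A3) in
  let m1 := (g12 + g13 - g23 - 1) * (g23 - 1) in
  let m2 := (g12 - g13 + g23 - 1) * (g13 - 1) in
  let m3 := (- g12 + g13 + g23 - 1) * (g12 - 1) in
  let den := m1 * gam s A1 + m2 * gam s A2 + m3 * gam s A3 in
  let O := den^-1 *: (m1 * gam s A1 *: A1 + m2 * gam s A2 *: A2
                      + m3 * gam s A3 *: A3) in
  let mO2 := m1 ^+ 2 + m2 ^+ 2 + m3 ^+ 2
             + 2 * (m1 * m2 * g12 + m1 * m3 * g13 + m2 * m3 * g23) in
  let D3 := \det (gmat3 g12 g13 g23) in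
  let H3 := 2 * (g12 - 1) * (g13 - 1) * (g23 - 1) in
  (* (i) *)
  (forall P, is_circumgyrocenter s A1 A2 A3 P -> P = O) /\
  (* (ii) *)
  (exists c : R, c != 0 /\
     m1 = c * (cos (al1 + del / 2) * sin al1) /\
     m2 = c * (cos (al2 + del / 2) * sin al2) /\
     m3 = c * (cos (al3 + del / 2) * sin al3)) /\
  (* (iii) *)
  (mO2 = ((g12 + g13 + g23 - 1) ^+ 2 - 2 * (g12 ^+ 2 + g13 ^+ 2 + g23 ^+ 2 - 1))
          * (1 + 2 * g12 * g13 * g23 - g12 ^+ 2 - g13 ^+ 2 - g23 ^+ 2) /\
   mO2 = D3 * (D3 - H3)) /\
  (* (iv) *)
  ((den != 0 /\ in_ball s O) <-> 0 < mO2) /\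
  (0 < mO2 <->
     3 * sin (del / 2) < sin (2 * al1 + del / 2) + sin (2 * al2 + del / 2)
                         + sin (2 * al3 + del / 2)) /\
  (0 < mO2 <->
     sin (del / 2) < sin (al1 + del / 2) * sin (al2 + del / 2) * sin (al3 + del / 2)) /\
  (0 < mO2 <->
     2 * (g12 ^+ 2 + g13 ^+ 2 + g23 ^+ 2 - 1) < (g12 + g13 + g23 - 1) ^+ 2) /\
  (0 < mO2 <->
     (g12 + g13 - g23 - 1) ^+ 2 < 4 * (g12 - 1) * (g13 - 1)).
Proof.
move=> hn hs hb1 hb2 hb3 hind al1 al2 al3 del g12 g13 g23 m1 m2 m3 den O mO2 D3 H3.
have eal1 : al1 = gangle s A1 A2 A3 by [].
have eal2 : al2 = gangle s A2 A1 A3 by [].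
have eal3 : al3 = gangle s A3 A1 A2 by [].
have edel : del = pi - al1 - al2 - al3 by [].
have eg12 : g12 = gam s (gvec s A1 A2) by [].
have eg13 : g13 = gam s (gvec s A1 A3) by [].
have eg23 : g23 = gam s (gvec s A2 A3) by [].
have em1 : m1 = (g12 + g13 - g23 - 1) * (g23 - 1) by [].
have em2 : m2 = (g12 - g13 + g23 - 1) * (g13 - 1) by [].
have em3 : m3 = (- g12 + g13 + g23 - 1) * (g12 - 1) by [].
have eden : den = m1 * gam s A1 + m2 * gam s A2 + m3 * gam s A3 by [].
have eO : O = den^-1 *: (m1 * gam s A1 *: A1 + m2 * gam s A2 *: A2
                      + m3 * gam s A3 *: A3) by [].
have emO2 : mO2 = m1 ^+ 2 + m2 ^+ 2 + m3 ^+ 2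
             + 2 * (m1 * m2 * g12 + m1 * m3 * g13 + m2 * m3 * g23) by [].
have eD3 : D3 = \det (gmat3 g12 g13 g23) by [].
have eH3 : H3 = 2 * (g12 - 1) * (g13 - 1) * (g23 - 1) by [].
clearbody al1 al2 al3 del g12 g13 g23 m1 m2 m3 den O mO2 D3 H3.
have h1 := ball_dot hs hb1; have h2 := ball_dot hs hb2; have h3 := ball_dot hs hb3.
have G1 := gam_gt0 hs h1; have G2 := gam_gt0 hs h2; have G3 := gam_gt0 hs h3.
have b12 := gvec_ball hs h1 h2; have b13 := gvec_ball hs h1 h3.
have b23 := gvec_ball hs h2 h3.
have g12p : 0 < g12 by rewrite eg12 gam_gt0.
have g13p : 0 < g13 by rewrite eg13 gam_gt0.
have g23p : 0 < g23 by rewrite eg23 gam_gt0.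
have s21 : gam s (gvec s A2 A1) = g12 by rewrite (gam_gvec_sym hs h2 h1).
have s31 : gam s (gvec s A3 A1) = g13 by rewrite (gam_gvec_sym hs h3 h1).
have s32 : gam s (gvec s A3 A2) = g23 by rewrite (gam_gvec_sym hs h3 h2).
have eX := dot_gvec_self hs h1 h2; have eY := dot_gvec_self hs h1 h3.
have eZ := gvec_dotL hs h1 h2 h3.
rewrite -eg12 -eg13 -eg23 in eX eY eZ.
have hcs := cs_strict hind.
rewrite eX eY eZ in hcs.
have hs0 : s != 0 by rewrite gt_eqF.
have hD : 0 < Dv g12 g13 g23.
  have -> : Dv g12 g13 g23 =
    (s ^+ 2 * (1 - (g12 ^+ 2)^-1) * (s ^+ 2 * (1 - (g13 ^+ 2)^-1))
     - (s ^+ 2 * (1 - g23 / (g12 * g13))) ^+ 2) * (g12 ^+ 2 * g13 ^+ 2) / s ^+ 4.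
    by rewrite /Dv; field; rewrite !gt_eqF.
  apply: divr_gt0; [apply: mulr_gt0; [by rewrite subr_gt0 | by rewrite !mulr_gt0 ?exprn_gt0] | by rewrite exprn_gt0].
have gsq : forall A B : 'rV[R]_n, dotv A A < s ^+ 2 -> dotv B B < s ^+ 2 ->
   gam s (gvec s A B) ^+ 2 - 1 =
   gam s (gvec s A B) ^+ 2 * (dotv (gvec s A B) (gvec s A B) / s ^+ 2).
  move=> A B hA hB; have := gam_sq hs (gvec_ball hs hA hB); lra.
have [w20 w30] := indep_neq0 hind.
have hg12 : 1 < g12.
  have := gsq _ _ h1 h2; rewrite -eg12 => e.
  have : 0 < g12 ^+ 2 - 1 by rewrite e mulr_gt0 ?exprn_gt0 // divr_gt0 ?dotv_gt0 ?exprn_gt0.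
  nra.
have hg13 : 1 < g13.
  have := gsq _ _ h1 h3; rewrite -eg13 => e.
  have : 0 < g13 ^+ 2 - 1 by rewrite e mulr_gt0 ?exprn_gt0 // divr_gt0 ?dotv_gt0 ?exprn_gt0.
  nra.
have hg23 : 1 < g23.
  have := gsq _ _ h2 h3; rewrite -eg23 => e.
  have : 0 <= g23 ^+ 2 - 1.
    rewrite e; apply: mulr_ge0; first exact: exprn_ge0 (ltW g23p).
    by apply: divr_ge0; [exact: dotv_ge0 | exact: exprn_ge0 (ltW hs)].
  move=> hge; have hge1 : 1 <= g23 by nra.
  rewrite lt_neqAle hge1 andbT; apply/eqP => e1.
  move: hD; rewrite /Dv -e1; have := sqr_ge0 (g12 - g13); nra.
have p0 : 0 < Num.sqrt (g12 ^+ 2 - 1) by rewrite sqrtr_gt0; nra.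
have q0 : 0 < Num.sqrt (g13 ^+ 2 - 1) by rewrite sqrtr_gt0; nra.
have r0 : 0 < Num.sqrt (g23 ^+ 2 - 1) by rewrite sqrtr_gt0; nra.
have hal1 : al1 = acos ((g12 * g13 - g23) /
      (Num.sqrt (g12 ^+ 2 - 1) * Num.sqrt (g13 ^+ 2 - 1))).
  rewrite eal1 /gangle eZ (normv_gvec hs h1 h2) (normv_gvec hs h1 h3) -eg12 -eg13.
  by congr acos; field; rewrite !gt_eqF.
have hal2 : al2 = acos ((g12 * g23 - g13) /
      (Num.sqrt (g12 ^+ 2 - 1) * Num.sqrt (g23 ^+ 2 - 1))).
  rewrite eal2 /gangle (gvec_dotL hs h2 h1 h3) (normv_gvec hs h2 h1) (normv_gvec hs h2 h3).
  rewrite s21 -eg13 -eg23.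
  by congr acos; field; rewrite !gt_eqF.
have hal3 : al3 = acos ((g13 * g23 - g12) /
      (Num.sqrt (g13 ^+ 2 - 1) * Num.sqrt (g23 ^+ 2 - 1))).
  rewrite eal3 /gangle (gvec_dotL hs h3 h1 h2) (normv_gvec hs h3 h1) (normv_gvec hs h3 h2).
  rewrite s31 s32 -eg12.
  by congr acos; field; rewrite !gt_eqF.
have [cii [civ2 civ3]] := core hg12 hg13 hg23 hD.
rewrite -hal1 -hal2 -hal3 -edel -em1 -em2 -em3 in cii civ2 civ3.
have hE : mO2 = ((g12 + g13 + g23 - 1) ^+ 2 - 2 * (g12 ^+ 2 + g13 ^+ 2 + g23 ^+ 2 - 1))
   * Dv g12 g13 g23 by rewrite emO2 em1 em2 em3 /Dv; ring.
have mpos : 0 < mO2 <->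
   0 < (g12 + g13 + g23 - 1) ^+ 2 - 2 * (g12 ^+ 2 + g13 ^+ 2 + g23 ^+ 2 - 1).
  rewrite hE; split => h; first by rewrite -(pmulr_lgt0 _ hD).
  by rewrite mulr_gt0.
have [V eV] : exists V, V = m1 * gam s A1 *: A1 + m2 * gam s A2 *: A2
                           + m3 * gam s A3 *: A3 by eexists.
have hq := quad hs m1 m2 m3 h1 h2 h3.
rewrite -eg12 -eg13 -eg23 -emO2 -eden -eV in hq.
rewrite -eV in eO.
split.
  move=> P [[a [b [hwb eP]]] [hPb [d12 d23]]].
  have hw := ball_dot hs hwb.
  have [l1 [l2 [l3 [eg ev]]]] := circ_rep hs h1 h2 h3 hw.
  rewrite -eP in eg ev.
  have hP := ball_dot hs hPb.
  have L1 := L_rep hs h1 h2 h3 h1 hP eg ev.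
  have L2 := L_rep hs h1 h2 h3 h2 hP eg ev.
  have L3 := L_rep hs h1 h2 h3 h3 hP eg ev.
  rewrite (gam_gvec_self hs h1) s21 s31 in L1.
  rewrite (gam_gvec_self hs h2) -eg12 s32 in L2.
  rewrite (gam_gvec_self hs h3) -eg13 -eg23 in L3.
  have q12 := gam_of_norm s d12; have q23 := gam_of_norm s d23.
  rewrite -q12 in L2; rewrite -q23 -q12 in L3.
  have t0 := gam_gt0 hs (gvec_ball hs hP h1).
  move: L1 L2 L3 t0; set t := gam s (gvec s P A1) => L1 L2 L3 t0.
  have e1 : l1 + l2 * g12 + l3 * g13 = t by rewrite L1; ring.
  have e2 : l1 * g12 + l2 + l3 * g23 = t by rewrite L2; ring.
  have e3 : l1 * g13 + l2 * g23 + l3 = t by rewrite L3; ring.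
  have [el1 el2 el3] := solve3 (lt0r_neq0 hD) e1 e2 e3.
  rewrite -em1 -em2 -em3 in el1 el2 el3.
  have gP := gam_gt0 hs hP.
  rewrite el1 el2 el3 in eg ev.
  have den0 : den != 0.
    apply/eqP => e0; move: gP; rewrite eg.
    have -> : t / Dv g12 g13 g23 * m1 * gam s A1 + t / Dv g12 g13 g23 * m2 * gam s A2 +
      t / Dv g12 g13 g23 * m3 * gam s A3 = t / Dv g12 g13 g23 * den by rewrite eden; ring.
    by rewrite e0 mulr0 ltxx.
  have -> : P = (gam s P)^-1 *: (gam s P *: P).
    by rewrite scalerA mulVf ?scale1r // gt_eqF.
  rewrite eden in den0; rewrite ev eO eV eden eg.
  apply/rowP => i; rewrite !mxE.
  field.
  rewrite den0 lt0r_neq0 //=.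
  have -> : t * m1 * gam s A1 + t * m2 * gam s A2 + t * m3 * gam s A3 =
     t * (m1 * gam s A1 + m2 * gam s A2 + m3 * gam s A3) by ring.
  by rewrite mulf_neq0 // lt0r_neq0.
split; first exact: cii.
split.
  split; first by rewrite emO2 em1 em2 em3; ring.
  by rewrite hE eD3 det_gmat3 eH3 /Dv; ring.
split.
  rewrite -hq -(iv1_aux _ (s2_gt0 hs) (dotv_ge0 V)).
  have -> : in_ball s O <-> dotv O O < s ^+ 2.
    by split; [exact: ball_dot | exact: dot_ball].
  by rewrite eO dotvZl dotvZr.
split; first exact: (iff_trans mpos civ2).
split; first exact: (iff_trans mpos civ3).
split.
  apply: (iff_trans mpos); split; lra.
apply: (iff_trans mpos).
have -> : (g12 + g13 + g23 - 1) ^+ 2 - 2 * (g12 ^+ 2 + g13 ^+ 2 + g23 ^+ 2 - 1) =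
   4 * (g12 - 1) * (g13 - 1) - (g12 + g13 - g23 - 1) ^+ 2 by ring.
split; lra.
Qed.
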